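(* Let $\mathcal{P}$ be a finite nonempty set of stochastic trees and $\Pi=(G,\{[s]\}_{s\in S_\mathcal{P}})$ a stochastic partition of $S_\mathcal{P}$. Then the quotient $\mathcal{P}/\Pi$ is a well-defined LPTS; that is, for every transition $(g,a,\mu)$ of $\mathcal{P}/\Pi$, $\mu$ is a probability distribution on $G$.
   Context: $\mathrm{Dist}(S)$ is the set of discrete probability distributions on $S$ (rational probabilities), $\delta_g$ the Dirac distribution on $g$. An LPTS is $\langle S,s^0,\alpha,\tau\rangle$ with finite $S$, start $s^0$, finite actions $\alpha$, finite $\tau\subseteq S\times\alpha\times\mathrm{Dist}(S)$; write $s\xrightarrow{a}\mu$. A stochastic tree is an LPTS whose start state is in the support of no transition's distribution and each other state is in the support of exactly one transition's distribution; for a non-start state $s$, $\mathrm{parent}(s)$ is the source state of that unique transition. $S_\mathcal{P}$ is the (disjoint) union of the state sets of the trees in $\mathcal{P}$. A stochastic partition of $S_\mathcal{P}$ is a pair $(G,\{[s]\}_{s\in S_\mathcal{P}})$ with $G\subseteq 2^{S_\mathcal{P}}$, $\bigcup G=S_\mathcal{P}$, and each $[s]$ a partial function $G\to\mathrm{Dist}(G)$ (with the convention $[s](g')(g)=0$ for all $g$ when $[s](g')$ is undefined), such that: (1) there is $g^0\in G$ with $[s^0_P](g)=\delta_{g^0}$ for every $P\in\mathcal{P}$ and every $g\in G$; (2) for every non-start state $s$ and $g\in G$, $[s](g)$ is defined iff $[\mathrm{parent}(s)](g')(g)>0$ for some $g'\in G$; and moreover for all $s\in S_\mathcal{P}$,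 $g\in G$: $s\in g$ iff $[s](g')(g)>0$ for some $g'\in G$. The quotient $\mathcal{P}/\Pi$ has states $G$, start state $g^0$, actions $\bigcup_{P\in\mathcal{P}}\alpha_P$, and $(g,a,\mu)$ is a transition iff some $P\in\mathcal{P}$ has a transition $s\xrightarrow{a}\mu_p$ with $s\in g$ and, for every $g'\in G$, $\mu(g')=\sum_{s'\in g'}[s'](g)(g')\cdot\mu_p(s')$. *)

(* Defs.v *)
From HB Require Import structures.
From mathcomp Require Import all_boot all_order all_algebra.
Set Implicit Arguments. Unset Strict Implicit. Unset Printing Implicit Defensive.
Import Order.TTheory GRing.Theory Num.Theory.
Local Open Scope ring_scope.

Definition isDist (T : finType) (mu : {ffun T -> rat}) : Prop :=
  (forall x, 0 <= mu x) /\ \sum_(x : T) mu x = 1.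

Definition dirac (T : finType) (g : T) : {ffun T -> rat} := [ffun x => (x == g)%:R].

(* An LPTS over a common (finite) universe of action names A.  The transition
   relation is a finite list of triples (s, a, mu). *)
Record LPTS (A : finType) := MkLPTS {
  st : finType;
  start : st;
  acts : {set A};
  trans : seq (st * A * {ffun st -> rat})
}.

(* Well-formedness: tau is a (duplicate-free) subset of S x alpha x Dist(S). *)
Definition is_LPTS (A : finType) (L : LPTS A) : Prop :=
  uniq (trans L) /\
  forall s a mu, (s, a, mu) \in trans L -> a \in acts L /\ isDist mu.

Definition is_stoch_tree (A : finType) (L : LPTS A) : Prop :=
  [/\ is_LPTS L,
      (forall t, t \in trans L -> t.2 (start L) = 0) &
      (forall s, s != start L -> count (fun t : st L * A * {ffun st L -> rat} => 0 < t.2 s) (trans L) = 1%N)].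

Definition is_parent (A : finType) (L : LPTS A) (s p : st L) : Prop :=
  exists a mu, (p, a, mu) \in trans L /\ 0 < mu s.

Notation SP P := {i : _ & st (P i)}.
Definition inj (A I : finType) (P : I -> LPTS A) (i : I) (s : st (P i)) : SP P :=
  @Tagged I i (fun j => st (P j)) s.

Notation GT G := {g : {set _} | g \in G}.

(* Value [s](g')(g), with the convention 0 when [s](g') is undefined. *)
Definition pv (T : finType) (G : {set {set T}})
  (part : T -> GT G -> option {ffun GT G -> rat}) (s : T) (g' g : GT G) : rat :=
  if part s g' is Some d then d g else 0.

Definition stoch_partition (A I : finType) (P : I -> LPTS A)
  (G : {set {set SP P}}) (part : SP P -> GT G -> option {ffun GT G -> rat}) : Prop :=
  [/\ (forall s : SP P, exists g : GT G, s \in val g),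
      (forall s g d, part s g = Some d -> isDist d),
      (exists g0 : GT G, forall i g, part (inj (start (P i))) g = Some (dirac g0)),
      (forall i (s : st (P i)), s != start (P i) -> forall p, is_parent s p ->
         forall g, part (inj s) g <> None <-> exists g', 0 < pv part (inj p) g' g) &
      (forall (s : SP P) (g : GT G), s \in val g <-> exists g', 0 < pv part s g' g)].

Definition qtrans (A I : finType) (P : I -> LPTS A)
  (G : {set {set SP P}}) (part : SP P -> GT G -> option {ffun GT G -> rat})
  (g : GT G) (a : A) (mu : {ffun GT G -> rat}) : Prop :=
  exists i (s : st (P i)) (mup : {ffun st (P i) -> rat}),
    [/\ (s, a, mup) \in trans (P i), inj s \in val g &
        forall g' : GT G,
          mu g' = \sum_(s' : st (P i) | inj s' \in val g') pv part (inj s') g g' * mup s'].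

(* Main.v *)
Require Import Defs.
From mathcomp Require Import all_boot all_order all_algebra.
Import Order.TTheory GRing.Theory Num.Theory.
Local Open Scope ring_scope.

Theorem lemma8 (A I : finType) (P : I -> LPTS A)
  (G : {set {set SP P}}) (part : SP P -> GT G -> option {ffun GT G -> rat}) :
  (exists i : I, True) ->
  (forall i, is_stoch_tree (P i)) ->
  @stoch_partition A I P G part ->
  forall (g : GT G) (a : A) (mu : {ffun GT G -> rat}),
    @qtrans A I P G part g a mu -> isDist mu.
Proof.
move=> _ Htree [Hcov Hdist Hstart Hpar Hmem] g a mu [i [s [mup [Hin Hsg Hmu]]]].
have [[_ HL] Hst _] := Htree i.
have [_ [Hmup0 Hmup1]] := HL _ _ _ Hin.
have Hs0 : mup (start (P i)) = 0 by exact: (Hst _ Hin).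
have pv_ge0 : forall x g1 g2, 0 <= pv part x g1 g2.
  move=> x g1 g2; rewrite /pv; case E: (part x g1) => [d|] //.
  by have [H _] := Hdist _ _ _ E.
have pv_out : forall x (g1 g2 : GT G), x \notin val g2 -> pv part x g1 g2 = 0.
  move=> x g1 g2 Hx; apply/eqP; apply: contraNT Hx => Hne.
  apply/(Hmem x g2); exists g1; by rewrite lt_def Hne pv_ge0.
have Hsum1 : forall s', 0 < mup s' -> \sum_(g' : GT G) pv part (inj s') g g' = 1.
  move=> s' Hp.
  have Hne : s' != start (P i) by apply/eqP => E; move: Hp; rewrite E Hs0 ltxx.
  have Hdef : part (inj s') g <> None.
    apply/(Hpar i s' Hne s); first by exists a, mup.
    exact/(Hmem (inj s) g).
  rewrite /pv; case E: (part (inj s') g) Hdef => [d|] // _.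
  by have [_ H] := Hdist _ _ _ E.
split.
- move=> g'; rewrite Hmu; apply: sumr_ge0 => s' _; apply: mulr_ge0 => //; exact: pv_ge0.
- have E : forall g' : GT G, mu g' = \sum_(s' : st (P i)) pv part (inj s') g g' * mup s'.
    move=> g'; rewrite Hmu big_mkcond /=; apply: eq_bigr => s' _.
    by case: ifP => // /negbT /pv_out ->; rewrite mul0r.
  under eq_bigr => g' _ do rewrite E.
  rewrite exchange_big /= -Hmup1; apply: eq_bigr => s' _.
  rewrite -mulr_suml.
  have := Hmup0 s'; rewrite le_eqVlt => /orP [/eqP <-|Hp]; first by rewrite mulr0.
  by rewrite Hsum1 // mul1r.
Qed.
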